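(* Let $a,b,c,d\ge1$ be integers and let $$M=\begin{bmatrix}a&-1&-1&-1\\-1&b&-1&-1\\-1&-1&c&-1\\-1&-1&-1&d\end{bmatrix}.$$ If $\det M=0$ and two of $a,b,c,d$ equal $5$, then the other two are either $1$ and $5$ (in some order) or $2$ and $2$. *)

(* Defs.v *)
From mathcomp Require Import all_boot all_algebra.
Set Implicit Arguments. Unset Strict Implicit. Unset Printing Implicit Defensive.
Import GRing.Theory Num.Theory.
Local Open Scope ring_scope.

Definition Mmat (x : 'I_4 -> int) : 'M[int]_4 :=
  \matrix_(i < 4, j < 4) (if i == j then x i else -1).

Definition abcd (a b c d : int) (i : 'I_4) : int :=
  nth 0 [:: a; b; c; d] i.

(* Main.v *)
Require Import Defs.
From mathcomp Require Import all_boot all_algebra ring zify.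
Import GRing.Theory Num.Theory.
Local Open Scope ring_scope.

Lemma det4 (x : 'I_4 -> int) : \det (Mmat x) =
  let X0 := x 0 + 1 in let X1 := x 1 + 1 in let X2 := x 2 + 1 in let X3 := x 3 + 1 in
  X0*X1*X2*X3 - (X1*X2*X3 + X0*X2*X3 + X0*X1*X3 + X0*X1*X2).
Proof.
rewrite (expand_det_row _ ord0) !big_ord_recl big_ord0 /cofactor.
rewrite !(expand_det_row _ ord0) !big_ord_recl !big_ord0 /cofactor.
rewrite !(expand_det_row _ ord0) !big_ord_recl !big_ord0 /cofactor.
rewrite !det_mx11 !mxE /=.
set y := fun n : nat => x (inord n).
have E : forall i, x i = y (val i) by move=> i; rewrite /y inord_val.
rewrite !E /=.
ring.
Qed.

Lemma key (P Q : int) : 1 <= P -> 1 <= Q ->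
  6*6*(P+1)*(Q+1) - ((P+1)*(Q+1)*6*2 + 6*6*(P+1+Q+1)) = 0 ->
  (P = 1 /\ Q = 5) \/ (P = 5 /\ Q = 1) \/ (P = 2 /\ Q = 2).
Proof.
move=> hP hQ E.
have E' : 2*(P+1)*(Q+1) = 3*(P+1) + 3*(Q+1) by lia.
have [h|h] : P <= 2 \/ Q <= 2.
  case: (lerP P 2) => hp; first by left.
  case: (lerP Q 2) => hq; first by right.
  have : 0 < (P-2)*(Q-2) by apply: mulr_gt0; lia.
  have -> : (P-2)*(Q-2) = P*Q - 2*P - 2*Q + 4 by ring.
  have E2 : 2*(P*Q) - (P+Q+4) = 2*(P+1)*(Q+1) - (3*(P+1) + 3*(Q+1)) by ring.
  rewrite E' subrr in E2.
  move: E2; generalize (P*Q) => R E2 HR; lia.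
- have [eP|eP] : P = 1 \/ P = 2 by lia; subst P.
  + left; lia.
  + right; right; lia.
- have [eP|eP] : Q = 1 \/ Q = 2 by lia; subst Q.
  + right; left; lia.
  + right; right; lia.
Qed.

Theorem lemma3p9 (a b c d : int) :
  1 <= a -> 1 <= b -> 1 <= c -> 1 <= d ->
  \det (Mmat (abcd a b c d)) = 0 ->
  forall i j k l : 'I_4,
    uniq [:: i; j; k; l] ->
    abcd a b c d i = 5 -> abcd a b c d j = 5 ->
    (abcd a b c d k = 1 /\ abcd a b c d l = 5) \/
    (abcd a b c d k = 5 /\ abcd a b c d l = 1) \/
    (abcd a b c d k = 2 /\ abcd a b c d l = 2).
Proof.
move=> ha hb hc hd; rewrite det4 /= => H i j k l.
case: i => [[|[|[|[|i]]]] //= Hi];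
case: j => [[|[|[|[|j]]]] //= Hj];
case: k => [[|[|[|[|k]]]] //= Hk];
case: l => [[|[|[|[|l]]]] //= Hl];
rewrite /abcd /= => _ E1 E2; subst;
apply: key => //; apply: etrans H; ring.
Qed.
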